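(* Let $n\ge 1$, $\nu>0$, and let $\alpha_u,\alpha_y\ge 0$ with $\max\{\alpha_u,\alpha_y\}>0$. Let $M\in\mathbb{R}^{n\times n}$ be diagonal with positive diagonal entries and $L\in\mathbb{R}^{n\times n}$. Let $\mathcal{A}_k\subseteq\{1,\dots,n\}$ and let $\Pi_k$ be the diagonal matrix with $(\Pi_k)_{ii}=1$ if $i\in\mathcal{A}_k$ and $0$ otherwise. Set $\gamma_1=\frac{\alpha_y^2\nu}{\alpha_y^2\nu+\alpha_u^2}$, $\gamma_2=\frac{\alpha_u^2}{\alpha_y^2\nu+\alpha_u^2}$, $$\mathbb{S}_k=\nu LM^{-1}L^T+M-\frac{1}{\alpha_y^2\nu+\alpha_u^2}(\alpha_y\nu LM^{-1}-\alpha_u I)\Pi_k M\Pi_k(\alpha_y\nu LM^{-1}-\alpha_u I)^T,$$ $L_1=\sqrt{\nu}L(I-\gamma_1\Pi_k)^{1/2}+(I-\gamma_2\Pi_k)^{1/2}M$ and $\widehat{\mathbb{S}}_k=L_1M^{-1}L_1^T$. If $\mathcal{A}_k=\{1,\dots,n\}$, then $\widehat{\mathbb{S}}_k=\mathbb{S}_k$.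
   Context: Square roots of nonnegative diagonal matrices are taken entrywise. *)

(* Defs.v *)
From HB Require Import structures.
From mathcomp Require Import all_boot all_order all_algebra.
Set Implicit Arguments. Unset Strict Implicit. Unset Printing Implicit Defensive.
Import Order.TTheory GRing.Theory Num.Theory.
Local Open Scope ring_scope.

Definition Pimx (R : ringType) (n : nat) (A : {set 'I_n}) : 'M[R]_n :=
  \matrix_(i, j) (if (i == j) && (i \in A) then 1 else 0).

Definition sqrt_diag (R : rcfType) (n : nat) (D : 'M[R]_n) : 'M[R]_n :=
  \matrix_(i, j) (if i == j then Num.sqrt (D i i) else 0).

(* Main.v *)
Require Import Defs.
From HB Require Import structures.
From mathcomp Require Import all_boot all_order all_algebra.
From mathcomp Require Import ring lra.
Import Order.TTheory GRing.Theory Num.Theory.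
Local Open Scope ring_scope.

Theorem corollary4p2 (R : rcfType) (n : nat) (nu alpha_u alpha_y : R)
    (M L : 'M[R]_n) (A : {set 'I_n}) :
  (0 < n)%N -> 0 < nu -> 0 <= alpha_u -> 0 <= alpha_y ->
  0 < Num.max alpha_u alpha_y ->
  is_diag_mx M -> (forall i, 0 < M i i) ->
  let Pi := Pimx R A in
  let c := alpha_y ^+ 2 * nu + alpha_u ^+ 2 in
  let gamma1 := alpha_y ^+ 2 * nu / c in
  let gamma2 := alpha_u ^+ 2 / c in
  let Minv := invmx M in
  let B := alpha_y * nu *: (L *m Minv) - alpha_u *: 1%:M in
  let S := nu *: (L *m Minv *m L^T) + M - c^-1 *: (B *m Pi *m M *m Pi *m B^T) in
  let L1 := Num.sqrt nu *: (L *m sqrt_diag (1%:M - gamma1 *: Pi))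
            + sqrt_diag (1%:M - gamma2 *: Pi) *m M in
  let Shat := L1 *m Minv *m L1^T in
  A = [set: 'I_n] -> Shat = S.
Proof.
move=> n0 nu0 au0 ay0 mx0 Md Mpos Pi c g1 g2 Minv B S L1 Shat HA.
have PiE : Pi = 1%:M.
  apply/matrixP=> i j; rewrite /Pi /Pimx HA !mxE in_setT andbT.
  by case: eqP.
have sqE : forall g : R, 0 <= 1 - g ->
    sqrt_diag (1%:M - g *: Pi) = (Num.sqrt (1 - g))%:M.
  move=> g _; apply/matrixP=> i j; rewrite /sqrt_diag PiE !mxE eqxx /=.
  by case: eqP => //= _; rewrite mulr1.
have MT : M^T = M.
  by case/diag_mxP: Md => d ->; rewrite tr_diag_mx.
have Mu : M \in unitmx.
  rewrite unitmxE unitfE; case/diag_mxP: (Md) => d dE.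
  rewrite dE det_diag; apply: lt0r_neq0; apply: prodr_gt0 => i _.
  by have := Mpos i; rewrite dE mxE eqxx mulr1n.
have MMi : M *m Minv = 1%:M by rewrite mulmxV.
have MiM : Minv *m M = 1%:M by rewrite mulVmx.
have MiT : Minv^T = Minv by rewrite trmx_inv MT.
have c0 : 0 < c.
  move: mx0; rewrite lt_max => /orP[h|h]; rewrite /c.
    by apply: ltr_wpDl; [apply: mulr_ge0; [apply: sqr_ge0|apply: ltW]|apply: exprn_gt0].
  by apply: ltr_wpDr; [apply: sqr_ge0|apply: mulr_gt0=>//; apply: exprn_gt0].
have g12 : 1 - g1 = g2 by rewrite /g1 /g2; move: (lt0r_neq0 c0); rewrite /c => cn0; field.
have g21 : 1 - g2 = g1 by rewrite /g1 /g2; move: (lt0r_neq0 c0); rewrite /c => cn0; field.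
have g1p : 0 <= g1 by apply: divr_ge0; [apply: mulr_ge0; [apply: sqr_ge0|apply: ltW]|apply: ltW].
have g2p : 0 <= g2 by apply: divr_ge0; [apply: sqr_ge0|apply: ltW].
rewrite /Shat /L1 !sqE ?g12 ?g21 // mul_mx_scalar mul_scalar_mx scalerA.
set a := Num.sqrt nu * Num.sqrt g2.
set b := Num.sqrt g1.
set k := alpha_y * nu.
set X := L *m Minv *m L^T.
have LMM : L *m Minv *m M = L by rewrite -mulmxA MiM mulmx1.
have E1 : (a *: L + b *: M) *m Minv *m (a *: L + b *: M)^T
   = (a * a) *: X + (a * b) *: L + (b * a) *: L^T + (b * b) *: M.
  rewrite linearD !linearZ /= MT mulmxDl -!scalemxAl MMi.
  rewrite mulmxDl !mulmxDr -!scalemxAl -!scalemxAr !scalerA !mul1mx LMM.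
  by rewrite addrA.
have E2 : S = nu *: X + M - c^-1 *: ((k * k) *: X - (k * alpha_u) *: L
     - (alpha_u * k) *: L^T + (alpha_u * alpha_u) *: M).
  rewrite /S /B PiE !mulmx1; congr (_ - c^-1 *: _).
  rewrite -/k mulmxDl mulNmx -!scalemxAl LMM mul_scalar_mx.
  rewrite linearD linearN !linearZ /= trmx_mul MiT trmx1.
  rewrite scale1r mulmxDl !mulmxDr -!scalemxAl -!scalemxAr !scalerA.
  rewrite !mulNmx !mulmxN !mulmx1 !mulmxA MMi mul1mx -/X.
  by apply/matrixP => i j; rewrite !mxE; ring.
rewrite E1 E2.
have haa : a * a = nu * g2 by rewrite /a mulrACA -!expr2 !sqr_sqrtr // ltW.
have hbb : b * b = g1 by rewrite -expr2 sqr_sqrtr.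
have hab : a * b = k * alpha_u / c.
  have e : nu * g2 * g1 = (k * alpha_u / c) ^+ 2.
    rewrite /g1 /g2 /k; move: (lt0r_neq0 c0); rewrite /c => cn0; field; exact: cn0.
  have nug2 : 0 <= nu * g2 by apply: mulr_ge0 => //; apply: ltW.
  have kc : 0 <= k * alpha_u / c.
    apply: divr_ge0; last by apply: ltW.
    by apply: mulr_ge0 => //; apply: mulr_ge0 => //; apply: ltW.
  rewrite /a /b -(sqrtrM _ (ltW nu0)) -(sqrtrM _ nug2) e sqrtr_sqr ger0_norm //.
have hba : b * a = k * alpha_u / c by rewrite mulrC.
rewrite haa hbb hab hba.
apply/matrixP => i j; rewrite !mxE /g1 /g2 /k.
move: (lt0r_neq0 c0); rewrite /c => cn0; field; exact: cn0.
Qed.
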